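(* Let $w$ be a finite balanced word over $\Sigma=\{a,b\}$. Then for any integer $k>0$, $P(w)\equiv(0,0)\pmod k$ (i.e., both $|w|_a$ and $|w|_b$ are divisible by $k$) if and only if $w$ is an abelian $k$-power.
   Context: $|w|_x$ is the number of occurrences of letter $x$ in $w$, and $P(w)=(|w|_a,|w|_b)$ is the Parikh vector. A word $w$ over $\{a,b\}$ is balanced if for any two factors $u,v$ of $w$ of the same length, $\big||u|_a-|v|_a\big|\leq 1$. An abelian $k$-power is a word of the form $v_1v_2\cdots v_k$ where all $v_i$ have the same Parikh vector. *)

(* Defs.v *)
From HB Require Import structures.
From mathcomp Require Import all_boot.
Set Implicit Arguments. Unset Strict Implicit. Unset Printing Implicit Defensive.

Inductive letter := la | lb.

Definition letter_eqb (x y : letter) : bool :=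
  match x, y with la, la | lb, lb => true | _, _ => false end.
Lemma letter_eqP : Equality.axiom letter_eqb.
Proof. by case; case; constructor. Qed.
HB.instance Definition _ := hasDecEq.Build letter letter_eqP.

Definition word := seq letter.

Definition occ (x : letter) (w : word) : nat := count_mem x w.

Definition parikh (w : word) : nat * nat := (occ la w, occ lb w).

Definition factor (u w : word) : bool := infix u w.

Definition balanced (w : word) : Prop :=
  forall u v : word, factor u w -> factor v w -> size u = size v ->
    occ la u <= occ la v + 1 /\ occ la v <= occ la u + 1.

Definition abelian_power (k : nat) (w : word) : Prop :=
  exists vs : seq word, [/\ size vs = k, w = flatten vs &
    forall i j, i < k -> j < k -> parikh (nth [::] vs i) = parikh (nth [::] vs j)].

(* Main.v *)
Require Import Defs.
From mathcomp Require Import all_boot.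
From mathcomp Require Import zify.

Fixpoint blocks (k m : nat) (w : word) : seq word :=
  match k with 0 => [::] | k'.+1 => take m w :: blocks k' m (drop m w) end.

Lemma size_blocks k m w : size (blocks k m w) = k.
Proof. by elim: k w => //= k IH w; rewrite IH. Qed.

Lemma flatten_blocks k m w : size w = k * m -> flatten (blocks k m w) = w.
Proof.
elim: k w => [|k IH] w /= hs; first by case: w hs.
rewrite IH ?cat_take_drop // size_drop hs mulSn; lia.
Qed.

Lemma blocks_prop k m w u : size w = k * m -> u \in blocks k m w ->
  infix u w /\ size u = m.
Proof.
elim: k w => [|k IH] w //= hs; rewrite inE => /orP [/eqP ->|hu].
  by split; [exact: infix_take | rewrite size_take; move: hs; rewrite mulSn; case: ltnP => //; lia].
have [h1 h2] := IH (drop m w) ltac:(rewrite size_drop hs mulSn; lia) hu.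
split => //; apply: infix_suffix_trans h1 _.
by apply/suffixP; exists (take m w); rewrite cat_take_drop.
Qed.

Lemma occ_ab u : occ la u + occ lb u = size u.
Proof. by elim: u => //= -[] u IH; rewrite /occ /= in IH *; lia. Qed.

Lemma sumn_ge s p : all (fun y => p <= y) s -> size s * p <= sumn s.
Proof. by elim: s => //= x s IH /andP [h1 h2]; have := IH h2; lia. Qed.

Lemma sumn_le s p : all (fun y => y <= p) s -> sumn s <= size s * p.
Proof. by elim: s => //= x s IH /andP [h1 h2]; have := IH h2; lia. Qed.

Lemma const_seq (s : seq nat) p :
  sumn s = size s * p -> (forall x y, x \in s -> y \in s -> x <= y + 1) ->
  forall x, x \in s -> x = p.
Proof.
move=> hsum hb x hx.
have hp := perm_to_rem hx; have hsz := perm_size hp; have hsn := perm_sumn hp.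
rewrite /= in hsz hsn.
have [lt|ge] := ltnP p x.
  have : all (fun y => p <= y) (rem x s).
    apply/allP => y /mem_rem hy; have := hb x y hx hy; lia.
  move/sumn_ge; lia.
have [lt2|ge2] := ltnP x p; last lia.
have : all (fun y => y <= p) (rem x s).
  apply/allP => y /mem_rem hy; have := hb y x hy hx; lia.
move/sumn_le; lia.
Qed.

Theorem lemma4 (w : word) (k : nat) :
  balanced w -> 0 < k ->
  ((k %| occ la w) && (k %| occ lb w) <-> abelian_power k w).
Proof.
move=> hbal hk; split.
- case/andP => /dvdnP [p hp] /dvdnP [q hq].
  set m := p + q.
  have hs : size w = k * m by rewrite -occ_ab hp hq /m; lia.
  exists (blocks k m w); split; first exact: size_blocks.
    by rewrite flatten_blocks.
  have key : forall u, u \in blocks k m w -> parikh u = (p, q).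
    move=> u hu.
    have hw := flatten_blocks _ _ _ hs.
    have hsum : sumn (map (occ la) (blocks k m w)) = size (map (occ la) (blocks k m w)) * p.
      by rewrite size_map size_blocks -count_flatten hw -/(occ la w) hp mulnC.
    have hb : forall x y, x \in map (occ la) (blocks k m w) -> y \in map (occ la) (blocks k m w) -> x <= y + 1.
      move=> x y /mapP [u1 h1 ->] /mapP [u2 h2 ->].
      have [i1 z1] := blocks_prop _ _ _ _ hs h1; have [i2 z2] := blocks_prop _ _ _ _ hs h2.
      by case: (hbal u1 u2 i1 i2 ltac:(by rewrite z1 z2)).
    have [hi hz] := blocks_prop _ _ _ _ hs hu.
    have e := const_seq _ _ hsum hb _ (map_f (occ la) hu).
    rewrite /parikh e; congr pair; have := occ_ab u; rewrite hz /m e.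
    lia.
  move=> i j hi hj; rewrite !key //; apply: mem_nth; rewrite size_blocks //.
- case=> vs [hsz -> hpar].
  have hm : forall x, map (occ x) vs = nseq k (occ x (nth [::] vs 0)).
    move=> x; apply: (@eq_from_nth _ 0); first by rewrite size_map size_nseq.
    move=> i; rewrite size_map hsz => hi; rewrite (nth_map [::]) ?hsz // nth_nseq hi.
    have := hpar i 0 hi hk; case: x; rewrite /parikh; case => //.
  by rewrite /occ !count_flatten -!/(occ _ _) !hm !sumn_nseq !dvdn_mull.
Qed.
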